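(* Let $\pi_0:Z_0\to Z$ be the minimal resolution of a log terminal surface singularity, with exceptional curves $E_1,\dots,E_r$, $b_i=-E_i^2$, and numerical cycle $Z_{\mathrm{num}}$. Let $D=\sum_{i=1}^r n_iE_i$ be an effective exceptional divisor and let $s$ be the minimal integer with $D\le sZ_{\mathrm{num}}$. Then $$-D^2\ge 2s+\sum_{i=1}^r(b_i-2)n_i.$$
   Context: The numerical cycle $Z_{\mathrm{num}}$ is the minimal nonzero effective $\pi_0$-exceptional divisor $F$ with $F\cdot E_i\le0$ for all $i$. *)

(* Defs.v *)
From mathcomp Require Import all_boot all_order all_algebra.
Set Implicit Arguments. Unset Strict Implicit. Unset Printing Implicit Defensive.
Import Order.TTheory GRing.Theory Num.Theory.
Local Open Scope ring_scope.

(* Exceptional configuration: r exceptional curves E_0..E_{r-1};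
   M i j = E_i . E_j (intersection matrix), pa i = arithmetic genus of E_i. *)

Definition selfint_b (r : nat) (M : 'M[int]_r) (i : 'I_r) : int := - M i i.

(* K_{Z_0} . E_i by adjunction: 2 p_a(E_i) - 2 - E_i^2 *)
Definition canon_dot (r : nat) (M : 'M[int]_r) (pa : 'I_r -> nat) (i : 'I_r) : int :=
  2 * (pa i)%:Z - 2 - M i i.

Definition intersection_matrix (r : nat) (M : 'M[int]_r) : Prop :=
  (forall i j, M i j = M j i) /\ (forall i j, i != j -> 0 <= M i j).

Definition neg_definite (r : nat) (M : 'M[int]_r) : Prop :=
  forall v : 'I_r -> rat, (exists i, v i != 0) ->
    \sum_i \sum_j v i * v j * (M i j)%:~R < 0.

Definition connected_config (r : nat) (M : 'M[int]_r) : Prop :=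
  forall i j : 'I_r, connect (fun k l => M k l != 0) i j.

(* minimality: no (-1)-curve, i.e. no smooth rational curve with E^2 = -1 *)
Definition minimal_config (r : nat) (M : 'M[int]_r) (pa : 'I_r -> nat) : Prop :=
  forall i, ~ (M i i = -1 /\ pa i = 0%N).

(* Log terminal: writing K_{Z_0} = pi_0^* K_Z + sum_j a_j E_j (Mumford's
   numerical pull-back), all discrepancies satisfy a_j > -1.  The a_j are
   determined by K_{Z_0}.E_i = sum_j a_j E_j.E_i (unique by negative
   definiteness). *)
Definition log_terminal (r : nat) (M : 'M[int]_r) (pa : 'I_r -> nat) : Prop :=
  exists a : 'I_r -> rat,
    (forall i, \sum_j a j * (M j i)%:~R = (canon_dot M pa i)%:~R) /\
    (forall j, -1 < a j).

Definition log_terminal_min_resolution (r : nat) (M : 'M[int]_r) (pa : 'I_r -> nat)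
  : Prop :=
  [/\ intersection_matrix M, neg_definite M, connected_config M,
      minimal_config M pa & log_terminal M pa].

Definition dot_E (r : nat) (M : 'M[int]_r) (m : 'I_r -> nat) (i : 'I_r) : int :=
  \sum_j (m j)%:Z * M j i.

Definition dot (r : nat) (M : 'M[int]_r) (m n : 'I_r -> nat) : int :=
  \sum_i \sum_j (m i)%:Z * (n j)%:Z * M i j.

(* effective exceptional divisors are coefficient vectors m : 'I_r -> nat;
   F <= G componentwise *)
Definition div_le (r : nat) (m n : 'I_r -> nat) : Prop := forall i, (m i <= n i)%N.

Definition nonzero_div (r : nat) (m : 'I_r -> nat) : Prop := exists i, m i != 0%N.

Definition anti_nef (r : nat) (M : 'M[int]_r) (m : 'I_r -> nat) : Prop :=
  forall i, dot_E M m i <= 0.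

Definition numerical_cycle (r : nat) (M : 'M[int]_r) (z : 'I_r -> nat) : Prop :=
  [/\ nonzero_div z, anti_nef M z &
      forall F : 'I_r -> nat, nonzero_div F -> anti_nef M F -> div_le z F].

(* Main.v *)
Require Import Defs.
From mathcomp Require Import all_boot all_order all_algebra.
From mathcomp Require Import zify ring lra.
Import Order.TTheory GRing.Theory Num.Theory.
Set Implicit Arguments. Unset Strict Implicit. Unset Printing Implicit Defensive.
Local Open Scope ring_scope.

Definition form (R : numDomainType) (r : nat) (M : 'M[int]_r) (u v : 'I_r -> R) : R :=
  \sum_i \sum_j u i * v j * (M i j)%:~R.

Definition qf (r : nat) (M : 'M[int]_r) (u : 'I_r -> int) : int :=
  - form M u u - \sum_i (- M i i - 2) * u i.

Definition ev (R : numDomainType) (r : nat) (i : 'I_r) : 'I_r -> R := fun k => (k == i)%:R.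

Lemma sum_delta (R : numDomainType) r (c : 'I_r -> R) i :
  \sum_k c k * ev R i k = c i.
Proof.
rewrite (bigD1 i) //= /ev eqxx mulr1 big1 ?addr0 // => j /negPf ->; by rewrite mulr0.
Qed.

Lemma form_ev (R : numDomainType) r (M : 'M[int]_r) (u : 'I_r -> R) i :
  form M u (ev R i) = \sum_k u k * (M k i)%:~R.
Proof.
rewrite /form; apply eq_bigr => k _.
rewrite (bigD1 i) //= /ev eqxx mulr1 big1 ?addr0 // => j /negPf ->; by rewrite mulr0 mul0r.
Qed.

Lemma form_evev (R : numDomainType) r (M : 'M[int]_r) i :
  form M (ev R i) (ev R i) = (M i i)%:~R.
Proof.
rewrite form_ev (bigD1 i) //= /ev eqxx mul1r big1 ?addr0 // => j /negPf ->; by rewrite mul0r.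
Qed.

Lemma formC (R : numDomainType) r (M : 'M[int]_r) u v :
  (forall i j, M i j = M j i) -> form M u v = form (R:=R) M v u.
Proof.
move=> HM; rewrite /form exchange_big; apply eq_bigr => i _; apply eq_bigr => j _.
by rewrite HM (mulrC (u j)).
Qed.

Lemma formDl (R : numDomainType) r (M : 'M[int]_r) (u v w x : 'I_r -> R) :
  (forall i, w i = u i + v i) -> form M w x = form M u x + form M v x.
Proof.
move=> H; rewrite /form -big_split; apply eq_bigr => i _; rewrite -big_split.
by apply eq_bigr => j _; rewrite H !mulrDl.
Qed.

Lemma form0 (R : numDomainType) r (M : 'M[int]_r) (u v : 'I_r -> R) :
  (forall i, u i = 0) -> form M u v = 0.
Proof. by move=> H; rewrite /form big1 // => i _; rewrite big1 // => j _; rewrite H !mul0r. Qed.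

Lemma qf_add r (M : 'M[int]_r) (u v w : 'I_r -> int) :
  (forall i j, M i j = M j i) -> (forall i, w i = u i + v i) ->
  qf M w = qf M u + qf M v - 2 * form M u v.
Proof.
move=> HM H; rewrite /qf (formDl _ _ H) (@formC _ _ M u w HM) (formDl _ _ H).
rewrite (@formC _ _ M v w HM) (formDl _ _ H) (@formC _ _ M v u HM).
have -> : \sum_i (- M i i - 2) * w i =
  \sum_i (- M i i - 2) * u i + \sum_i (- M i i - 2) * v i.
  by rewrite -big_split; apply eq_bigr => i _; rewrite H mulrDr.
ring.
Qed.

Lemma qf0 r (M : 'M[int]_r) u : (forall i, u i = 0) -> qf M u = 0.
Proof.
by move=> H; rewrite /qf form0 // big1 ?subr0 ?oppr0 // => i _; rewrite H mulr0.
Qed.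

Lemma negpart r (M : 'M[int]_r) (v : 'I_r -> rat) :
  intersection_matrix M -> neg_definite M ->
  (forall i, 0 < v i -> 0 <= \sum_j v j * (M j i)%:~R) -> forall i, v i <= 0.
Proof.
move=> [HMs HMo] Hnd Hv.
pose P i := if 0 < v i then v i else 0. pose N i := if 0 < v i then 0 else - v i.
have P0 : forall i, 0 <= P i.
  by move=> i; rewrite /P; case: ifP => // /ltW.
have N0 : forall i, 0 <= N i.
  by move=> i; rewrite /N; case: ifP => // /negbT; rewrite -leNgt oppr_ge0.
have PN : forall i, P i * N i = 0.
  by move=> i; rewrite /P /N; case: ifP; rewrite ?mulr0 ?mul0r.
have PvN : forall i, P i = v i + N i.
  by move=> i; rewrite /P /N; case: ifP; rewrite ?addr0 ?addrN.
have HPP : 0 <= form M P P.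
  rewrite (formDl _ _ PvN) (@formC _ _ M v P HMs) (@formC _ _ M N P HMs).
  apply: addr_ge0.
    apply: sumr_ge0 => i _.
    have -> : \sum_j P i * v j * (M i j)%:~R = P i * \sum_j v j * (M j i)%:~R.
      by rewrite big_distrr; apply eq_bigr => j _; rewrite -mulrA HMs.
    rewrite /P; case: ifP => h; last by rewrite mul0r.
    by apply: mulr_ge0; [exact: ltW | exact: Hv].
  apply: sumr_ge0 => i _; apply: sumr_ge0 => j _.
  case: (eqVneq i j) => [<-|hij]; first by rewrite PN mul0r.
  by rewrite mulr_ge0 ?mulr_ge0 // ler0z HMo.
move=> i; rewrite leNgt; apply/negP => vi.
have : exists i, P i != 0 by exists i; rewrite /P vi gt_eqF.
move/Hnd; rewrite -/(form M P P) => H.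
by move: (lt_le_trans H HPP); rewrite ltxx.
Qed.

Lemma diag_neg r (M : 'M[int]_r) i : neg_definite M -> M i i < 0.
Proof.
move=> Hnd.
have : exists k, ev rat i k != 0 by exists i; rewrite /ev eqxx oner_eq0.
move/Hnd; rewrite -/(form M (ev rat i) (ev rat i)) form_evev.
by rewrite ltrz0.
Qed.

Lemma canon_ge0 r (M : 'M[int]_r) pa i :
  neg_definite M -> minimal_config M pa -> 0 <= canon_dot M pa i.
Proof.
move=> Hnd Hmin; have := diag_neg i Hnd; have := Hmin i; rewrite /canon_dot.
case: (pa i) => [|p] H h.
  have : M i i != -1 by apply/eqP => e; apply: H.
  lia.
lia.
Qed.

Lemma a_le0 r (M : 'M[int]_r) pa (a : 'I_r -> rat) :
  intersection_matrix M -> neg_definite M -> minimal_config M pa ->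
  (forall i, \sum_j a j * (M j i)%:~R = (canon_dot M pa i)%:~R) ->
  forall i, a i <= 0.
Proof.
move=> HM Hnd Hmin Ha; apply: (negpart HM Hnd) => i _.
by rewrite Ha ler0z canon_ge0.
Qed.

Lemma descent r (M : 'M[int]_r) pa (B : 'I_r -> int) :
  log_terminal_min_resolution M pa ->
  (forall i, 0 <= B i) -> (exists i, B i != 0) ->
  exists i, 0 < B i /\ \sum_k B k * M k i <= 1 + M i i.
Proof.
move=> [HM Hnd _ Hmin [a [Ha Ha1]]] B0 [i0 Bi0].
have al := a_le0 HM Hnd Hmin Ha.
case: (pickP (fun i => (0 < B i) && (\sum_k B k * M k i <= 1 + M i i))).
  by move=> i /andP[h1 h2]; exists i.
move=> Hno; exfalso.
pose v i := (B i)%:~R + a i.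
have : forall i, v i <= 0.
  apply: (negpart HM Hnd) => i vi.
  have Bi : 0 < B i.
    rewrite lt_neqAle B0 andbT eq_sym; apply/negP => /eqP e.
    by move: vi; rewrite /v e mulr0z add0r ltNge al.
  have := Hno i; rewrite Bi /= => /negbT; rewrite -ltNge => h.
  have -> : \sum_j v j * (M j i)%:~R =
     ((\sum_j B j * M j i) + canon_dot M pa i)%:~R.
    rewrite intrD -Ha rmorph_sum -big_split; apply eq_bigr => j _.
    by rewrite /v mulrDl /= rmorphM.
  rewrite ler0z; move: h; rewrite /canon_dot; move=> h.
  have e : (\sum_(k < r) B k * M k i) = \sum_j B j * M j i := erefl.
  move: h; rewrite e; lia.
move=> /(_ i0); rewrite /v.
have h1 : (1 : rat) <= (B i0)%:~R.
  rewrite ler1z; have := B0 i0; move: Bi0; lia.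
have := Ha1 i0; lra.
Qed.

Lemma sum_ge_one r (B : 'I_r -> int) i : (forall k, 0 <= B k) -> B i <= \sum_k B k.
Proof.
move=> B0; rewrite (bigD1 i) //= lerDl; exact: sumr_ge0.
Qed.

Lemma qf_ev r (M : 'M[int]_r) i : qf M (ev int i) = 2.
Proof.
rewrite /qf form_evev intz sum_delta; ring.
Qed.

Lemma base r (M : 'M[int]_r) pa (B : 'I_r -> int) :
  log_terminal_min_resolution M pa ->
  (forall i, 0 <= B i) -> (exists i, B i != 0) -> 2 <= qf M B.
Proof.
move=> Hlt.
have HMs : forall i j, M i j = M j i by case: Hlt => [[]].
suff : forall n : nat, forall B : 'I_r -> int, (forall i, 0 <= B i) ->
   \sum_k B k <= n%:Z -> (exists i, B i != 0) -> 2 <= qf M B.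
  move=> H B0 Bn; apply: (H (absz (\sum_k B k)) B B0 _ Bn).
  by rewrite abszE ler_norm.
elim=> [|n IH] {}B B0 Bs Bnz;
  have [i [Bi Hi]] := descent Hlt B0 Bnz.
  by have := sum_ge_one i B0; move: Bs Bi; lia.
pose B' k := B k - ev int i k.
have BB' : forall k, B k = B' k + ev int i k by move=> k; rewrite /B' subrK.
rewrite (qf_add HMs BB') qf_ev.
have Hf : form M B' (ev int i) <= 1.
  rewrite form_ev.
  have -> : \sum_k B' k * (M k i)%:~R = \sum_k B k * M k i - M i i.
    rewrite -[M i i](sum_delta (fun k => M k i) i) -sumrB; apply eq_bigr => k _.
    by rewrite /B' intz mulrBl (mulrC (ev _ _ _)).
  move: Hi; lia.
have B'0 : forall k, 0 <= B' k.
  move=> k; rewrite /B' /ev; case: (eqVneq k i) => [->|_] /=.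
    by move: Bi; lia.
  by rewrite subr0 B0.
case: (pickP (fun k => B' k != 0)) => [k Bk|Bz].
  have : 2 <= qf M B'.
    apply: IH => //; last by exists k.
    have : \sum_k B' k = \sum_k B k - 1.
      rewrite /B' sumrB; congr (_ - _).
      by rewrite -(sum_delta (fun _ => (1:int)) i); apply eq_bigr => j _; rewrite mul1r.
    move: Bs; lia.
  move: Hf; lia.
have Bz' : forall k, B' k = 0 by move=> k; apply/eqP; have := Bz k; move/negbFE.
rewrite qf0 // form0 //; lia.
Qed.

Lemma main_ind r (M : 'M[int]_r) pa (z : 'I_r -> int) :
  log_terminal_min_resolution M pa ->
  (forall i, 0 <= z i) -> (forall j, \sum_i z i * M i j <= 0) ->
  forall (s : nat) (D : 'I_r -> int), (forall i, 0 <= D i) ->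
  (forall i, D i <= s%:Z * z i) ->
  (forall t : nat, (forall i, D i <= t%:Z * z i) -> (s <= t)%N) ->
  2 * s%:Z <= qf M D.
Proof.
move=> Hlt z0 zn.
have HMs : forall i j, M i j = M j i by case: Hlt => [[]].
have HMo : forall i j, i != j -> 0 <= M i j by case: Hlt => [[]].
elim=> [|s IH] D D0 Ds Dmin.
  rewrite qf0 // => i; have := D0 i; have := Ds i; lia.
have [i0 Hi0] : exists i, s%:Z * z i < D i.
  case: (pickP (fun i => s%:Z * z i < D i)) => [i h|h]; first by exists i.
  have := Dmin s; rewrite ltnn => H; exfalso; apply/negP: isT; apply: H.
  by move=> i; have := h i; move/negbT; rewrite -leNgt.
have zi0 : 0 < z i0 by have := Ds i0; move: Hi0; nia.
pose A i := if D i <= s%:Z * z i then D i else s%:Z * z i.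
pose B i := D i - A i.
have DAB : forall i, D i = A i + B i by move=> i; rewrite /B addrC subrK.
have KEY : forall i, (s%:Z * z i - A i) * B i = 0.
  move=> i; rewrite /B /A; case: ifP => h.
    by rewrite subrr mulr0.
  by rewrite subrr mul0r.
have Ale : forall i, A i <= s%:Z * z i.
  by move=> i; rewrite /A; case: ifP.
have A0 : forall i, 0 <= A i.
  move=> i; rewrite /A; case: ifP => // _; have := z0 i; nia.
have B0 : forall i, 0 <= B i.
  move=> i; rewrite /B subr_ge0 /A; case: ifP => // /negbT; rewrite -ltNge => h; exact: ltW.
have Ai0 : A i0 = s%:Z * z i0 by rewrite /A leNgt Hi0.
have IHA : 2 * s%:Z <= qf M A.
  apply: IH => // t Ht; have := Ht i0; rewrite Ai0 => h.
  have : (s%:Z <= t%:Z) by rewrite -(ler_pM2r zi0).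
  lia.
have HB : 2 <= qf M B.
  apply: (base Hlt B0); exists i0; rewrite /B Ai0 subr_eq0; apply/eqP => e.
  by move: Hi0; rewrite e ltxx.
have HAB : form M A B <= 0.
  apply: (@le_trans _ _ (\sum_i \sum_j (s%:Z * z i) * B j * M i j)).
    apply: ler_sum => i _; apply: ler_sum => j _; rewrite !intz.
    rewrite -subr_ge0 -!mulrBl.
    case: (eqVneq i j) => [<-|hij]; first by rewrite KEY mul0r.
    apply: mulr_ge0; last exact: HMo.
    by apply: mulr_ge0; [rewrite subr_ge0; exact: Ale | exact: B0].
  rewrite exchange_big; apply: sumr_le0 => j _.
  have -> : \sum_i s%:Z * z i * B j * M i j = (s%:Z * B j) * \sum_i z i * M i j.
    by rewrite mulr_sumr; apply eq_bigr => i _; ring.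
  apply: mulr_ge0_le0 => //; apply: mulr_ge0 => //.
rewrite (qf_add HMs DAB); move: IHA HB HAB; lia.
Qed.

Theorem mainTheorem11 (r : nat) (M : 'M[int]_r) (pa : 'I_r -> nat)
  (znum : 'I_r -> nat) (n : 'I_r -> nat) (s : nat) :
  log_terminal_min_resolution M pa ->
  numerical_cycle M znum ->
  (* s is the minimal integer with D <= s Z_num *)
  div_le n (fun i => (s * znum i)%N) ->
  (forall t : nat, div_le n (fun i => (t * znum i)%N) -> (s <= t)%N) ->
  - dot M n n >= 2 * s%:Z + \sum_i (selfint_b M i - 2) * (n i)%:Z.
Proof.
move=> Hlt [_ Hz _] Hs Hmin.
have := @main_ind r M pa (fun i => (znum i)%:Z) Hlt (fun i => isT) Hz s
  (fun i => (n i)%:Z) (fun i => isT).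
have e : qf M (fun i => (n i)%:Z) = - dot M n n - \sum_i (selfint_b M i - 2) * (n i)%:Z.
  rewrite /qf /form /dot /selfint_b; congr (- _ - _).
  by apply eq_bigr => i _; apply eq_bigr => j _; rewrite intz.
rewrite e => H.
have : 2 * s%:Z <= - dot M n n - \sum_i (selfint_b M i - 2) * (n i)%:Z.
  apply: H.
    by move=> i; rewrite -PoszM lez_nat; exact: Hs.
  by move=> t Ht; apply: Hmin => i; have := Ht i; rewrite -PoszM lez_nat.
lia.
Qed.
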